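(* Let $R=\mathbb C[S_1,\ldots,S_n]/I$ be a local algebra of dimension $n+2$ which is an $n$-factor, with a proper basis $\mu_1,\ldots,\mu_{n+2}$ (so $\mu_1=1$ and $\mu_2,\ldots,\mu_{n+1}$ are the images of $S_1,\ldots,S_n$). Suppose $B$ is a nondegenerate symmetric bilinear form on $R$ satisfying $B(\mu_ix,y)+B(x,\mu_iy)=0$ for all $i=2,\ldots,n+1$ and $x,y\in R$, and $B(1,1)=0$. Then: (1) $B(1,\mu_i)=0$ for $i=2,\ldots,n+1$; (2) $B(\mu_i,\mu_j)=-B(1,\mu_i\mu_j)$ for $i,j=2,\ldots,n+1$; (3) $B(\mu_i,\mu_{n+2})=0$ for $i=2,\ldots,n+2$, and $B(1,\mu_{n+2})\neq0$; (4) $\dim_{\mathbb C}\mathfrak m_R^2=1$ and $\mathfrak m_R^2=\langle\mu_{n+2}\rangle$; (5) if $B$ is normalized so that $B(1,\mu_{n+2})=-1$, then $B=B_0$.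
   Context: A local algebra means a finite-dimensional commutative associative unital $\mathbb C$-algebra with a unique maximal ideal $\mathfrak m_R$ and residue field $\mathbb C$. An $n$-factor is a quotient $\mathbb C[S_1,\ldots,S_n]/I$ in which the images of $S_1,\ldots,S_n$ are linearly independent (they lie in $\mathfrak m_R$). A $\mathbb C$-basis $\mu_1,\ldots,\mu_{n+2}$ of an $n$-factor $R$ is proper if $\mu_1=1$, $\mu_2,\ldots,\mu_{n+1}$ are the images of $S_1,\ldots,S_n$, $\mu_{n+2}$ can be expressed as a polynomial in $\mu_2,\ldots,\mu_{n+1}$, and every power $\mathfrak m_R^k$ is spanned by a subset of the basis vectors. When $\mathfrak m_R^2=\langle\mu_{n+2}\rangle$ is one-dimensional, $B_0$ is the symmetric bilinear form on $R$ defined by $B_0(\mu_1,\mu_j)=-\delta_{j,n+2}$ for all $j$, $B_0(\mu_i,\mu_{n+2})=-\delta_{i,1}$ for all $i$, and $B_0(\mu_i,\mu_j)=a_{ij}$ for $i,j=2,\ldots,n+1$, where $\mu_i\mu_j=a_{ij}\mu_{n+2}$ ($\delta$ is the Kronecker delta). *)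

(* Defs.v *)
From HB Require Import structures.
From mathcomp Require Import all_boot all_order all_algebra all_field.
Set Implicit Arguments. Unset Strict Implicit. Unset Printing Implicit Defensive.
Import Order.TTheory GRing.Theory Num.Theory.
Local Open Scope ring_scope.

Section LocalAlg.
Variables (F : fieldType) (R : falgType F).

Definition is_ideal (I : {vspace R}) : Prop :=
  forall r x, x \in I -> r * x \in I /\ x * r \in I.

Definition proper_ideal (I : {vspace R}) : Prop :=
  is_ideal I /\ (1 \notin I).

Definition maximal_ideal (I : {vspace R}) : Prop :=
  proper_ideal I /\
  forall J : {vspace R}, proper_ideal J -> (I <= J)%VS -> J = I.

(* R is a commutative local algebra with maximal ideal m and residue
   field F (i.e. R/m is one-dimensional over F). *)
Definition local_algebra_with (m : {vspace R}) : Prop :=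
  [/\ forall x y : R, x * y = y * x,
      maximal_ideal m,
      (forall J, maximal_ideal J -> J = m)
    & (\dim {:R} = (\dim m).+1)%N].

Definition ideal_pow (m : {vspace R}) (k : nat) : {vspace R} :=
  iter k (fun V => (m * V)%VS) fullv.

(* proper basis of an n-factor: mu`_0 = 1, mu`_1..mu`_n are the images of
   the generators S_1..S_n (they generate R as an algebra, lie in m and are
   linearly independent), mu`_(n+1) is a polynomial in them, and every power
   of m is spanned by a subset of the basis. *)
Definition proper_nfactor_basis (n : nat) (m : {vspace R})
    (mu : (n.+2).-tuple R) : Prop :=
  [/\ basis_of fullv mu /\ mu`_0 = 1,
      agenv <<[seq mu`_i | i <- iota 1 n]>>%VS = fullv,
      (forall i, (1 <= i <= n)%N -> mu`_i \in m),
      free [seq mu`_i | i <- iota 1 n] /\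
      mu`_(n.+1) \in agenv <<[seq mu`_i | i <- iota 1 n]>>%VS
    & forall k, exists J : bitseq, ideal_pow m k = <<mask J mu>>%VS].

(* a_ij : mu_i mu_j = a_ij mu_(n+2) *)
Definition a_coef (n : nat) (mu : (n.+2).-tuple R) (i j : nat) : F :=
  coord mu ord_max (mu`_i * mu`_j).

(* values of B_0 on basis (0-based indices: 0 ~ mu_1, n.+1 ~ mu_(n+2)) *)
Definition B0_basis (n : nat) (mu : (n.+2).-tuple R) (i j : nat) : F :=
  if i == 0%N then (if j == n.+1 then -1 else 0)
  else if j == 0%N then (if i == n.+1 then -1 else 0)
  else if (i == n.+1) || (j == n.+1) then 0
  else a_coef mu i j.

Definition B0 (n : nat) (mu : (n.+2).-tuple R) (x y : R) : F :=
  \sum_(i < n.+2) \sum_(j < n.+2)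
     coord mu i x * coord mu j y * B0_basis mu i j.

End LocalAlg.

(* Main.v *)
Require Import Defs.
From HB Require Import structures.
From mathcomp Require Import all_boot all_order all_algebra all_field.
From Stdlib Require Import Classical.
Import Order.TTheory GRing.Theory Num.Theory.
Local Open Scope ring_scope.

Lemma span_ind (K : fieldType) (vT : vectType K) (P : vT -> Prop) (s : seq vT) :
  P 0 -> (forall a x y, P x -> P y -> P (a *: x + y)) ->
  (forall v, v \in s -> P v) -> forall x, x \in <<s>>%VS -> P x.
Proof.
move=> P0 Plin Ps x; rewrite -[s]/(val (in_tuple s)) => /coord_span ->.
apply: big_ind => //.
  by move=> a b Pa Pb; rewrite -[a]scale1r; apply: Plin.
move=> i _; rewrite -[_ *: _]addr0; apply: Plin => //; apply: Ps.
by rewrite mem_nth // size_tuple.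
Qed.

Lemma prod_ind (K : fieldType) (aT : falgType K) (P : aT -> Prop) (U V : {vspace aT}) :
  P 0 -> (forall a x y, P x -> P y -> P (a *: x + y)) ->
  (forall u v, u \in U -> v \in V -> P (u * v)) -> forall x, x \in (U * V)%VS -> P x.
Proof.
move=> P0 Plin Puv x; rewrite unlock; apply: span_ind => // _ /allpairsP[[u v] /= [Uu Vv ->]].
by apply: Puv; apply: vbasis_mem.
Qed.

Lemma ex_max_ideal (K : fieldType) (R : falgType K) (I : {vspace R}) :
  Defs.proper_ideal I -> exists J, maximal_ideal J /\ (I <= J)%VS.
Proof.
suff: forall (k : nat) (I0 : {vspace R}), (\dim (fullv : {vspace R}) <= k + \dim I0)%N -> Defs.proper_ideal I0 ->
   exists J : {vspace R}, maximal_ideal J /\ (I0 <= J)%VS by move/(_ _ I (leq_addr _ _)).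
elim=> [|k IHk] {}I Hd PI; (case: (classic (maximal_ideal I)) => [MI|NMI];
  first by exists I; split => //).
all: have [J [PJ [IJ JI]]] : exists J, Defs.proper_ideal J /\ (I <= J)%VS /\ J <> I.
all: try (apply: NNPP => H; apply: NMI; split => // J PJ IJ;
  apply: NNPP => JI; apply: H; exists J; split => //).
all: have ltIJ : (\dim I < \dim J)%N.
all: try (have := dimv_leqif_eq IJ; rewrite ltn_neqAle => -[-> ->];
  rewrite andbT; apply/negP => /eqP E; apply: JI; exact/esym/E).
- exfalso; rewrite add0n in Hd; have := dimvS (subvf J); rewrite leqNgt => /negP; apply; exact: leq_ltn_trans Hd ltIJ.
- have [|J' [MJ' JJ']] := IHk J _ PJ; first by rewrite (leq_trans Hd) // addSnnS leq_add2l.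
  by exists J'; split => //; apply: subv_trans JJ'.
Qed.

Lemma no_idem (K : fieldType) (R : falgType K) (m : {vspace R}) (f : R) :
  (forall x y : R, x * y = y * x) -> maximal_ideal m ->
  (forall J, maximal_ideal J -> J = m) -> f \in m -> f * f = f -> f = 0.
Proof.
move=> Hc [[Hmid Hm1] _] Hu Hf Hff.
set J := (<[1 - f]> * fullv)%VS.
case: (boolP (1 \in J)) => [H1|H1].
  have P : forall y, y \in J -> f * y = 0.
    apply: prod_ind; first by rewrite mulr0.
      by move=> a x y Hx Hy; rewrite mulrDr -scalerAr Hx Hy scaler0 addr0.
    move=> u v /vlineP[k ->] _; rewrite -scalerAl scalerAr mulrA mulrBr mulr1 Hff subrr.
    by rewrite mul0r.
  by have := P 1 H1; rewrite mulr1.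
have PJ : Defs.proper_ideal J.
  split=> // r x Hx; suff Hxr : x * r \in J by rewrite Hc Hxr.
  have : x * r \in (J * fullv)%VS by apply: memv_mul; rewrite ?memvf.
  apply/subvP; rewrite /J -prodvA; apply: prodvSr; exact: subvf.
have [K' [MK JK]] := ex_max_ideal _ _ J PJ.
have := Hu _ MK => EK; rewrite EK in JK.
have H1f : 1 - f \in m by apply: (subvP JK); rewrite -[1 - f]mulr1 memv_mul ?memv_line ?memvf.
by case/negP: Hm1; rewrite -(subrK f 1) memvD.
Qed.

Theorem lemma6 (C : numClosedFieldType) (R : falgType C) (n : nat)
  (m : {vspace R}) (mu : (n.+2).-tuple R) (B : R -> R -> C)
  (Hloc : local_algebra_with m)
  (Hdim : \dim {:R} = (n + 2)%N)
  (Hbasis : proper_nfactor_basis m mu)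
  (Blin : forall (a : C) (x y z : R), B (a *: x + y) z = a * B x z + B y z)
  (Bsym : forall x y, B x y = B y x)
  (Bnd : forall x, (forall y, B x y = 0) -> x = 0)
  (Binv : forall i, (1 <= i <= n)%N ->
            forall x y, B (mu`_i * x) y + B x (mu`_i * y) = 0)
  (B11 : B 1 1 = 0) :
  [/\ (forall i, (1 <= i <= n)%N -> B 1 mu`_i = 0),
      (forall i j, (1 <= i <= n)%N -> (1 <= j <= n)%N ->
          B mu`_i mu`_j = - B 1 (mu`_i * mu`_j)),
      (forall i, (1 <= i <= n.+1)%N -> B mu`_i mu`_(n.+1) = 0)
        /\ B 1 mu`_(n.+1) != 0,
      \dim (ideal_pow m 2) = 1%N /\ ideal_pow m 2 = <[mu`_(n.+1)]>%VS
    & B 1 mu`_(n.+1) = -1 -> forall x y, B x y = B0 mu x y].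
Proof.
case: Hloc => Hcomm MM Huniq Hdimm.
have [[Hmid Hm1] _] := MM.
case: Hbasis => [[Hmub Hmu0] Hagen HmuG [HGfree Hz] Hmask].
set z := mu`_n.+1.
set G := <<[seq mu`_i | i <- iota 1 n]>>%VS.
have B0l : forall y, B 0 y = 0.
  move=> y; have h := Blin 1 0 0 y; rewrite scale1r addr0 mul1r -[LHS]addr0 in h.
  exact/esym/(addrI _ h).
have B0r : forall y, B y 0 = 0 by move=> y; rewrite Bsym.
have BD : forall x y w, B (x + y) w = B x w + B y w.
  by move=> x y w; have := Blin 1 x y w; rewrite scale1r mul1r.
have BZ : forall a x w, B (a *: x) w = a * B x w.
  by move=> a x w; have := Blin a x 0 w; rewrite addr0 B0l addr0.
have BDr : forall x y w, B w (x + y) = B w x + B w y.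
  by move=> x y w; rewrite Bsym BD !(Bsym w).
have BZr : forall a x w, B w (a *: x) = a * B w x.
  by move=> a x w; rewrite Bsym BZ Bsym.
have Bsuml : forall (I : Type) (r : seq I) (P : pred I) F w,
    B (\sum_(i <- r | P i) F i) w = \sum_(i <- r | P i) B (F i) w.
  move=> I r P F w; exact: (big_morph (fun x => B x w) (fun x y => BD x y w) (B0l w)).
have Bsumr : forall (I : Type) (r : seq I) (P : pred I) F w,
    B w (\sum_(i <- r | P i) F i) = \sum_(i <- r | P i) B w (F i).
  move=> I r P F w; rewrite Bsym Bsuml; apply: eq_bigr => i _; exact: Bsym.
pose Bp (k : nat) a := forall x y, B (a * x) y = (-1) ^+ k * B x (a * y).
have Bp_lin : forall k c a b, Bp k a -> Bp k b -> Bp k (c *: a + b).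
  move=> k c a b Ha Hb x y; rewrite !mulrDl -!scalerAl BD BDr BZ BZr Ha Hb.
  by rewrite mulrDr mulrCA.
have Bp0 : forall k, Bp k 0 by move=> k x y; rewrite !mul0r B0l B0r mulr0.
have Bp1 : Bp 0 1.
  by rewrite /Bp => x y; rewrite !mul1r.
have Bp_mul : forall k l a b, Bp k a -> Bp l b -> Bp (k + l) (a * b).
  move=> k l a b Ha Hb x y; rewrite -mulrA Ha Hb [b * (a * y)]mulrA (Hcomm b a).
  by rewrite exprD mulrA.
have Bp_mod : forall k a, Bp k a -> Bp (odd k) a.
  by move=> k a Ha x y; rewrite Ha signr_odd.
have Bp_G : forall a, a \in G -> Bp 1 a.
  apply: span_ind; [exact: Bp0 | exact: Bp_lin | move=> v /mapP[i]]; rewrite mem_iota add1n ltnS => Hi -> x y.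
  by have /eqP := Binv i Hi x y; rewrite addr_eq0 => /eqP ->; rewrite expr1 mulN1r.
have Bp_X : forall i a, a \in (G ^+ i)%VS -> Bp i a.
  elim=> [|i IHi] a.
    by rewrite expv0 => /vlineP[k ->]; rewrite -[k *: 1]addr0; apply: Bp_lin.
  rewrite expvSl; move: a; apply: prod_ind; [exact: Bp0 | exact: Bp_lin|].
  move=> u v Hu Hv; exact: (Bp_mul _ _ _ _ (Bp_G u Hu) (IHi v Hv)).
have [p [q [Hzpq [Hp Hq]]]] : exists p q, z = p + q /\ Bp 0 p /\ Bp 1 q.
  have : z \in agenv G by rewrite Hagen memvf.
  rewrite /agenv => /memv_sumP[vs Hvs ->].
  apply: (big_ind (fun x => exists p q, x = p + q /\ Bp 0 p /\ Bp 1 q)).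
  - by exists 0, 0; rewrite addr0.
  - move=> _ _ [p1 [q1 [-> [Hp1 Hq1]]]] [p2 [q2 [-> [Hp2 Hq2]]]].
    exists (p1 + p2), (q1 + q2); rewrite addrACA; split => //.
    by split; [rewrite -[p1]scale1r | rewrite -[q1]scale1r]; apply: Bp_lin.
  - move=> i _; have := Bp_mod _ _ (Bp_X _ _ (Hvs i isT)); case: (odd i) => /= H.
      by exists 0, (vs i); rewrite add0r.
    by exists (vs i), 0; rewrite addr0.
have Bdisj : forall a, Bp 0 a -> Bp 1 a -> a = 0.
  move=> a H0 H1; apply: Bnd => y; have h0 := H0 1 y; have h1 := H1 1 y.
  rewrite mulr1 in h0 h1; rewrite h1 in h0; rewrite expr1 mulN1r /= mul1r in h0.
  by rewrite h1 expr1 mulN1r; apply/eqP; rewrite oppr_eq0 -eqNr h0.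
have phi_odd : forall a, Bp 1 a -> B 1 a = 0.
  move=> a Ha; have h := Ha 1 1; rewrite !mulr1 expr1 mulN1r Bsym in h.
  by apply/eqP; rewrite -eqNr -h.
have uniq_dec : forall e1 e2 o1 o2, Bp 0 e1 -> Bp 0 e2 -> Bp 1 o1 -> Bp 1 o2 ->
    e1 + o1 = e2 + o2 -> e1 = e2 /\ o1 = o2.
  move=> e1 e2 o1 o2 He1 He2 Ho1 Ho2 E.
  have E' : e1 - e2 = o2 - o1.
    have -> : e1 = e2 + o2 - o1.
 by rewrite -E; exact: (esym (addrK _ _)).
    by rewrite addrAC [e2 + o2 - e2]addrAC subrr add0r.
  have Z : e1 - e2 = 0.
    apply: Bdisj; first by rewrite -scaleN1r addrC; apply: Bp_lin.
    by rewrite E' -scaleN1r addrC; apply: Bp_lin.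
  split; first by apply/eqP; rewrite -subr_eq0 Z.
  by apply/eqP; rewrite eq_sym -subr_eq0 -E' Z.
have decomp : forall y, exists c0 g c, g \in G /\ y = c0 *: 1 + g + c *: z.
  move=> y; rewrite (coord_basis Hmub (memvf y)) big_ord_recl big_ord_recr /=.
  set g := \sum_(i < n) _.
  exists (coord mu ord0 y), g, (coord mu (lift ord0 ord_max) y); split.
    rewrite /g; apply: memv_suml => i _; apply: memvZ; apply: memv_span.
    rewrite /bump leq0n add1n; apply: (map_f (fun j => mu`_j)); rewrite mem_iota add1n ltnS; exact: ltn_ord.
  by rewrite Hmu0 /bump leq0n add1n addrA.
have decomp2 : forall y, exists c0 c g, g \in G /\ y = (c0 *: 1 + c *: p) + (g + c *: q).
  move=> y; have [c0 [g [c [Hg ->]]]] := decomp y.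
  by exists c0, c, g; split => //; rewrite Hzpq scalerDr addrACA.
have BpZ : forall k c a, Bp k a -> Bp k (c *: a).
  by move=> k c a Ha; rewrite -[_ *: a]addr0; apply: Bp_lin.
have BpD : forall k a b, Bp k a -> Bp k b -> Bp k (a + b).
  by move=> k a b Ha Hb; rewrite -[a]scale1r; apply: Bp_lin.
have test : forall x, B x 1 = 0 -> (forall b, Bp 1 b -> B x b = 0) -> B x p = 0 -> x = 0.
  move=> x H1 Hb Hxp; apply: Bnd => y; have [c0 [c [g [Hg ->]]]] := decomp2 y.
  rewrite !BDr !BZr H1 Hxp (Hb g (Bp_G g Hg)) (Hb q Hq).
  by rewrite !mulr0 !addr0.
have phip : B 1 p = B 1 z by rewrite Hzpq BDr (phi_odd q Hq) addr0.
have phiz : B 1 z != 0.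
  apply/eqP => h; have : (1 : R) = 0.
    by apply: test; [exact: B11 | move=> b Hb; exact: phi_odd | rewrite phip].
  by move/eqP; rewrite oner_eq0.
have qG : q \in G.
  have [c0 [c [g [Hg Eq]]]] := decomp2 q.
  have [|E1 E2] := uniq_dec 0 (c0 *: 1 + c *: p) q (g + c *: q) (Bp0 0)
     (BpD _ _ _ (BpZ _ _ _ Bp1) (BpZ _ _ _ Hp)) Hq (BpD _ _ _ (Bp_G g Hg) (BpZ _ _ _ Hq))
     _; first by rewrite add0r.
  case: (eqVneq c 1) => [c1|c1].
    rewrite c1 scale1r in E1.
    have Ep : p = - (c0 *: 1) by apply/eqP; rewrite -addr_eq0 addrC -E1.
    by move/eqP: phiz; case; rewrite -phip Ep -scaleN1r !BZr B11 !mulr0.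
  have hc : 1 - c != 0 by rewrite subr_eq0 eq_sym.
  have Eg : (1 - c) *: q = g by rewrite scalerBl scale1r {1}E2 addrK.
  by rewrite -[q]scale1r -(mulVf hc) -scalerA Eg memvZ.
have odd_G : forall x, Bp 1 x -> x \in G.
  move=> x Hx; have [c0 [c [g [Hg Ex]]]] := decomp2 x.
  have [|E1 E2] := uniq_dec 0 (c0 *: 1 + c *: p) x (g + c *: q) (Bp0 0)
     (BpD _ _ _ (BpZ _ _ _ Bp1) (BpZ _ _ _ Hp)) Hx (BpD _ _ _ (Bp_G g Hg) (BpZ _ _ _ Hq))
     _; first by rewrite add0r.
  by rewrite E2 memvD // memvZ.
have GsubM : (G <= m)%VS.
  apply/span_subvP => v /mapP[i]; rewrite mem_iota add1n ltnS => Hi ->; exact: HmuG.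
have Hc0 : forall c0, c0 *: (1 : R) \in m -> c0 = 0.
  move=> c0 H; apply/eqP; apply: contraT => hc; case/negP: Hm1.
  have := memvZ (c0^-1) H; by rewrite scalerA mulVf // scale1r.
have dimm : \dim m = n.+1.
  by apply/eqP; rewrite -eqSS -Hdimm Hdim addn2.
have zm : z \in m.
  have [J1 HJ1] := Hmask 1.
  have Em : ideal_pow m 1 = m.
    rewrite /ideal_pow /=; apply/eqP; rewrite eqEsubv; apply/andP; split.
      by apply/prodvP => x r Hx _; exact: (Hmid r x Hx).2.
    by rewrite -{1}(prodv1 m) prodvSr ?subvf.
  rewrite Em in HJ1.
  case: (boolP (z \in m)) => // Hzm; exfalso.
  have : (m <= G)%VS.
    rewrite [X in (X <= _)%VS]HJ1; apply/span_subvP => v Hv.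
    have Hvm : v \in m by rewrite HJ1 memv_span.
    have /(nthP 0) [k Hk Hkv] := mem_mask Hv.
    rewrite size_tuple in Hk.
    case: k Hk Hkv => [|k] Hk Hkv; first by move: Hm1; rewrite -Hmu0 Hkv Hvm.
    rewrite !ltnS leq_eqVlt in Hk; case/orP: Hk => [/eqP Ek|Hk].
      by rewrite Ek in Hkv; move: Hzm; rewrite /z Hkv Hvm.
    rewrite -Hkv; apply: memv_span; apply: (map_f (fun j => mu`_j)).
    by rewrite mem_iota add1n ltnS.
  move/dimvS; rewrite dimm => H.
  have := leq_trans H (dim_span _); rewrite size_map size_iota.
  by rewrite ltnn.
have pm : p \in m.
  have -> : p = z - q by rewrite Hzpq addrK.
  by rewrite memvB // (subvP GsubM).
have even_m : forall x, Bp 0 x -> x \in m -> exists c, x = c *: p.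
  move=> x Hx Hxm; have [c0 [c [g [Hg Ex]]]] := decomp2 x.
  have [|E1 E2] := uniq_dec x (c0 *: 1 + c *: p) 0 (g + c *: q) Hx
     (BpD _ _ _ (BpZ _ _ _ Bp1) (BpZ _ _ _ Hp)) (Bp0 1) (BpD _ _ _ (Bp_G g Hg) (BpZ _ _ _ Hq))
     _; first by rewrite addr0.
  have : c0 *: 1 \in m.
    have -> : c0 *: 1 = x - c *: p by rewrite E1 addrK.
    by rewrite memvB // memvZ.
  by move/Hc0 => c00; exists c; rewrite E1 c00 scale0r add0r.
have m_dec : forall x, x \in m -> exists a c, Bp 1 a /\ x = a + c *: p.
  move=> x Hxm; have [c0 [c [g [Hg Ex]]]] := decomp2 x.
  have : c0 *: 1 \in m.
    have -> : c0 *: 1 = x - (g + c *: q) - c *: p by rewrite Ex !addrK.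
    by rewrite !memvB ?memvD ?memvZ // (subvP GsubM).
  move/Hc0 => c00; exists (g + c *: q), c; split.
    exact: (BpD _ _ _ (Bp_G g Hg) (BpZ _ _ _ Hq)).
  by rewrite Ex c00 scale0r add0r addrC.
have Hmf : (m * fullv <= m)%VS.
  by apply/prodvP => x r Hx _; exact: (Hmid r x Hx).2.
have pp : p * p = 0.
  have [lam Elam] := even_m (p * p) (Bp_mul _ _ _ _ Hp Hp) ((Hmid p p pm).1).
  case: (eqVneq lam 0) => [l0|hl]; first by rewrite Elam l0 scale0r.
  have Hf : lam^-1 *: p * (lam^-1 *: p) = lam^-1 *: p.
    by rewrite -scalerAl -scalerAr Elam !scalerA -mulrA mulVf // mulr1.
  have := no_idem _ _ m _ Hcomm MM Huniq (memvZ _ pm) Hf.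
  move/eqP; rewrite scaler_eq0 invr_eq0 (negPf hl) /= => /eqP ->; by rewrite mul0r.
have Bpp : B p p = 0.
  by have := Hp 1 p; rewrite mulr1 pp B0r mulr0.
have ab : forall a b, Bp 1 a -> Bp 1 b -> exists c, a * b = c *: p.
  move=> a b Ha Hb; apply: even_m; first exact: (Bp_mod _ _ (Bp_mul _ _ _ _ Ha Hb)).
  exact: (Hmid a b (subvP GsubM _ (odd_G b Hb))).1.
have ap : forall a, Bp 1 a -> a * p = 0.
  move=> a Ha; apply: test.
  - by rewrite Bsym; apply: phi_odd; exact: (Bp_mul _ _ _ _ Ha Hp).
  - move=> b Hb; have [c Ec] := ab a b Ha Hb.
    by rewrite Ha Ec BZr Bpp !mulr0.
  - rewrite Ha; have := Hp 1 (a * p); rewrite mulr1 => ->.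
    by rewrite [p * (a * p)]mulrA (Hcomm p a) -mulrA pp mulr0 B0r !mulr0.
have m2sub : (ideal_pow m 2 <= <[p]>)%VS.
  rewrite /ideal_pow /=; apply: subv_trans (prodvSr m Hmf) _.
  apply/prodvP => u v Hu Hv; have [a [c [Ha ->]]] := m_dec u Hu.
  have [b [d [Hb ->]]] := m_dec v Hv.
  rewrite mulrDl !mulrDr -!scalerAl -!scalerAr (ap a Ha) (Hcomm p b) (ap b Hb) pp.
  rewrite !scaler0 !addr0; have [e ->] := ab a b Ha Hb; exact: memvZ (memv_line p).
have pn0 : p != 0 by apply: contraNneq phiz => p0; rewrite -phip p0 B0r.
have pm2 : p \in ideal_pow m 2.
  have Hag : (agenv G <= 1 + G + ideal_pow m 2)%VS.
    rewrite /agenv; apply/subv_sumP => i _; case: i => [[|[|j]] Hi] /=.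
    - by rewrite expv0 -addvA addvSl.
    - by rewrite expv1 (subv_trans _ (addvSl _ _)) // addvSr.
    - apply: subv_trans (addvSr _ _); rewrite /ideal_pow /= 2!expvSl.
      apply: (prodvS GsubM); exact: (prodvS GsubM (subvf _)).
  have : z \in (1 + G + ideal_pow m 2)%VS by apply: (subvP Hag); rewrite Hagen memvf.
  case/memv_addP => u Hu [w Hw Ezw]; case/memv_addP: Hu => u1 /vlineP[c0 ->] [g Hg Eu].
  have [c Ew] : exists c, w = c *: p by apply/vlineP; exact: (subvP m2sub _ Hw).
  have [|E1 E2] := uniq_dec p (c0 *: 1 + c *: p) q g Hp
     (BpD _ _ _ (BpZ _ _ _ Bp1) (BpZ _ _ _ Hp)) Hq (Bp_G g Hg) _.
    by rewrite -Hzpq Ezw Eu Ew addrAC.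
  have c00 : c0 = 0.
    apply: Hc0; have -> : c0 *: 1 = p - c *: p by rewrite {1}E1 addrK.
    by rewrite memvB // memvZ.
  rewrite c00 scale0r add0r in E1.
  have : (1 - c) *: p = 0 by rewrite scalerBl scale1r {1}E1 subrr.
  move/eqP; rewrite scaler_eq0 (negPf pn0) orbF subr_eq0 => /eqP c1.
  by rewrite Ew -c1 scale1r in Hw.
have muG : forall i, (1 <= i <= n)%N -> mu`_i \in G.
  move=> i Hi; apply: memv_span; apply: (map_f (fun j => mu`_j)).
  by rewrite mem_iota add1n ltnS.
have zn0 : z != 0.
  apply: (free_not0 (basis_free Hmub)); apply: mem_nth; by rewrite size_tuple.
have zm2 : z \in ideal_pow m 2.
  have [J2 HJ2] := Hmask 2.
  have [v Hv] : exists v, v \in mask J2 mu.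
    case E: (mask J2 mu) => [|v s]; last by exists v; rewrite mem_head.
    by move: pm2; rewrite HJ2 E span_nil memv0 (negPf pn0).
  have Hvm : v \in ideal_pow m 2 by rewrite HJ2 memv_span.
  have [e Ev] : exists e, v = e *: p by apply/vlineP; exact: (subvP m2sub _ Hvm).
  have /(nthP 0) [k Hk Hkv] := mem_mask Hv.
  rewrite size_tuple in Hk.
  case: k Hk Hkv => [|k] Hk Hkv.
    by move: Hm1; rewrite -Hmu0 Hkv Ev memvZ.
  rewrite !ltnS leq_eqVlt in Hk; case/orP: Hk => [/eqP Ek|Hk].
    by rewrite Ek in Hkv; rewrite /z Hkv.
  exfalso; have Hk1 : (1 <= k.+1 <= n)%N by [].
  have H0 : mu`_k.+1 = 0.
    apply: Bdisj; last exact: Bp_G _ (muG _ Hk1).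
    by rewrite Hkv Ev; apply: BpZ.
  have Hmem : mu`_k.+1 \in [seq mu`_i | i <- iota 1 n].
    by apply: (map_f (fun j => mu`_j)); rewrite mem_iota add1n ltnS.
  by have := free_not0 HGfree Hmem; rewrite H0 eqxx.
have [cz Ez] : exists c, z = c *: p by apply/vlineP; exact: (subvP m2sub _ zm2).
have zz : z * z = 0 by rewrite Ez -scalerAl -scalerAr pp !scaler0.
have az : forall a, Bp 1 a -> a * z = 0.
  by move=> a Ha; rewrite Ez -scalerAr ap ?scaler0.
have Hze : Bp 0 z by rewrite Ez; apply: BpZ.
have Bzz : B z z = 0 by have := Hze 1 z; rewrite mulr1 zz B0r mulr0.
have B_odd_z : forall i, (1 <= i <= n)%N -> B mu`_i z = 0.
  move=> i Hi; have := Bp_G _ (muG _ Hi) 1 z; rewrite mulr1 => ->.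
  by rewrite az ?B0r ?mulr0 //; exact: Bp_G _ (muG _ Hi).
have Hm2 : ideal_pow m 2 = <[z]>%VS.
  apply/eqP; rewrite eqEsubv -memvE zm2 andbT; apply: subv_trans m2sub _.
  have cz0 : cz != 0 by apply: contraNneq zn0 => c0; rewrite Ez c0 scale0r.
  rewrite -memvE; have -> : p = cz^-1 *: z by rewrite Ez scalerA mulVf // scale1r.
  exact: memvZ (memv_line z).
have Bi1 : forall i, (1 <= i <= n)%N -> B 1 mu`_i = 0.
  by move=> i Hi; apply: phi_odd; apply: Bp_G; apply: muG.
have Bij : forall i j, (1 <= i <= n)%N -> (1 <= j <= n)%N ->
    B mu`_i mu`_j = - B 1 (mu`_i * mu`_j).
  move=> i j Hi Hj; have := Bp_G _ (muG _ Hi) 1 mu`_j.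
  by rewrite mulr1 expr1 mulN1r.
split => //.
- split => // i /andP[H1 H2]; rewrite leq_eqVlt in H2; case/orP: H2 => [/eqP ->|H2].
    exact: Bzz.
  by apply: B_odd_z; rewrite H1 -ltnS.
- by split => //; rewrite Hm2 dim_vline zn0.
move=> Hz1 x y.
have cls : forall i, (i < n.+2)%N -> [\/ i = 0%N, (1 <= i <= n)%N | i = n.+1].
  move=> [|i] Hi; first by constructor 1.
  rewrite !ltnS leq_eqVlt in Hi; case/orP: Hi => [/eqP->|Hi]; first by constructor 3.
  by constructor 2; apply/andP; split.
have mid0 : forall i, (1 <= i <= n)%N -> (i == 0%N) = false /\ (i == n.+1) = false.
  move=> i /andP[H1 H2]; split; first by apply/negP => /eqP E; rewrite E in H1.
  by apply: ltn_eqF; rewrite ltnS.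
have cz1 : coord mu ord_max z = 1.
  by rewrite (coord_free ord_max ord_max (basis_free Hmub)) eqxx.
have Hent : forall i j : 'I_(n.+2), B mu`_i mu`_j = B0_basis mu i j.
  move=> [i Hi] [j Hj] /=; rewrite /B0_basis.
  case: (cls i Hi) => [->|Hi'|->]; case: (cls j Hj) => [->|Hj'|->].
  - by rewrite /= Hmu0.
  - by have [-> ->] := mid0 j Hj'; rewrite Hmu0 Bi1.
  - by rewrite /= eqxx Hmu0.
  - by have [-> ->] := mid0 i Hi'; rewrite /= Hmu0 Bsym Bi1.
  - have [-> ->] := mid0 i Hi'; have [-> ->] := mid0 j Hj' => /=.
    have : mu`_i * mu`_j \in ideal_pow m 2.
      rewrite /ideal_pow /=; apply: memv_mul; first by rewrite (subvP GsubM) // muG.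
      by rewrite -[mu`_j]mulr1; apply: memv_mul; rewrite ?memvf // (subvP GsubM) // muG.
    rewrite Hm2 => /vlineP[d Ed].
    rewrite Bij // Ed BZr Hz1 /a_coef Ed linearZ /= cz1.
    by rewrite mulrN1 opprK mulr1.
  - by have [-> ->] := mid0 i Hi'; rewrite /= eqxx ?orbT B_odd_z.
  - by rewrite /= eqxx Hmu0 Bsym.
  - by have [-> ->] := mid0 j Hj'; rewrite /= eqxx Bsym B_odd_z.
  - by rewrite /= eqxx Bzz.
have -> : B x y = \sum_(i < n.+2) \sum_(j < n.+2)
    coord mu i x * coord mu j y * B mu`_i mu`_j.
  rewrite {1}(coord_basis Hmub (memvf x)) Bsuml; apply: eq_bigr => i _.
  rewrite BZ {1}(coord_basis Hmub (memvf y)) Bsumr mulr_sumr; apply: eq_bigr => j _.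
  by rewrite BZr mulrA.
by rewrite /B0; apply: eq_bigr => i _; apply: eq_bigr => j _; rewrite Hent.
Qed.
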